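(* Assume $r$ is a prime number distinct from the characteristic of $k$. For $\gamma\in D_\infty^*\cong GL_r(k_\infty)$ put $\mathbb H_\gamma=\{(z,\gamma z):z\in\Omega_r\}\subset\Omega_r\times\Omega_r$. Let $\gamma\in D^*$ with $\mathbb H_\gamma\ne\mathbb H_1$, and suppose $\alpha\in\mathbb H_\gamma\cap\mathbb H_1$. Let $T_\alpha\Omega_r^2\cong\mathbb C_\infty^{r-1}\times\mathbb C_\infty^{r-1}$ be the tangent space of $\Omega_r\times\Omega_r$ at $\alpha$, and $T_\alpha\mathbb H_\gamma$, $T_\alpha\mathbb H_1$ the tangent spaces of $\mathbb H_\gamma$, $\mathbb H_1$ at $\alpha$ viewed as subspaces of it. Then $T_\alpha\mathbb H_\gamma\cap T_\alpha\mathbb H_1=\{0\}$.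
   Context: $k$ is a global function field, $\infty$ a fixed place, $k_\infty$ the completion, $\mathbb C_\infty$ the completion of an algebraic closure of $k_\infty$. $D$ is a central division algebra over $k$ of dimension $r^2$ with $D\otimes_kk_\infty\cong M_r(k_\infty)$, so $D^*\subset GL_r(k_\infty)$. $\Omega_r=\mathbb P^{r-1}(\mathbb C_\infty)\setminus\bigcup(k_\infty\text{-rational hyperplanes})$, viewed as a rigid analytic space (in affine coordinates, the set of $(z_1,\dots,z_{r-1})\in\mathbb C_\infty^{r-1}$ with $c_1z_1+\cdots+c_{r-1}z_{r-1}+c_r\ne0$ for all nonzero $(c_1,\dots,c_r)\in k_\infty^r$), with $GL_r(k_\infty)$ acting by fractional linear transformations. *)

(* Defs.v *)
(* C plays the role of C_infty; k and kinf are subfields of C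
   given as predicates; the absolute value |.|_infty is absC : C -> R. *)
From HB Require Import structures.
From mathcomp Require Import all_boot all_order all_algebra.
From mathcomp Require Import reals.
Set Implicit Arguments. Unset Strict Implicit. Unset Printing Implicit Defensive.
Import Order.TTheory GRing.Theory Num.Theory.
Local Open Scope ring_scope.

Section Defs.
Variables (R : realType) (C : closedFieldType) (absC : C -> R).

Definition is_nonarch_abs : Prop :=
  [/\ forall x, 0 <= absC x,
      forall x, absC x = 0 <-> x = 0,
      forall x y, absC (x * y) = absC x * absC y &
      forall x y, absC (x + y) <= Num.max (absC x) (absC y)].

Definition is_subfield (S : C -> Prop) : Prop :=
  [/\ S 0, S 1,
      forall x y, S x -> S y -> S (x - y),
      forall x y, S x -> S y -> S (x * y) &
      forall x, S x -> x != 0 -> S x^-1].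

Definition prime_coefs (a : {poly C}) : Prop := forall i, exists m : nat, a`_i = m%:R.

Definition in_prime_ratfun (t y : C) : Prop :=
  exists a b : {poly C}, [/\ prime_coefs a, prime_coefs b, b.[t] != 0 & y = a.[t] / b.[t]].

(* k is a global function field: a finite extension of F_p(t), t transcendental *)
Definition global_function_field (k : C -> Prop) : Prop :=
  is_subfield k /\
  exists p : nat, [/\ prime p, (p%:R : C) = 0 &
  exists t : C, [/\ k t,
    (forall a : {poly C}, prime_coefs a -> a != 0 -> a.[t] != 0) &
    exists (m : nat) (s : 'I_m -> C), (forall i, k (s i)) /\
      forall x, k x -> exists c : 'I_m -> C,
        (forall i, in_prime_ratfun t (c i)) /\ x = \sum_i c i * s i]].

(* the place infinity: absC restricted to k is a nontrivial absolute value *)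
Definition nontrivial_on (k : C -> Prop) : Prop :=
  exists x, [/\ k x, absC x != 0 & absC x != 1].

Definition cauchy (u : nat -> C) : Prop :=
  forall eps : R, 0 < eps -> exists N, forall m p, (N <= m)%N -> (N <= p)%N ->
    absC (u m - u p) < eps.

Definition converges_to (u : nat -> C) (l : C) : Prop :=
  forall eps : R, 0 < eps -> exists N, forall m, (N <= m)%N -> absC (u m - l) < eps.

Definition is_completion (k kinf : C -> Prop) : Prop :=
  [/\ is_subfield kinf, (forall x, k x -> kinf x),
      (forall x, kinf x -> forall eps : R, 0 < eps -> exists y, k y /\ absC (x - y) < eps) &
      (forall u, (forall m, kinf (u m)) -> cauchy u -> exists l, kinf l /\ converges_to u l)].

Definition algebraic_over (S : C -> Prop) (y : C) : Prop :=
  exists a : {poly C}, [/\ a != 0, forall i, S a`_i & root a y].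

(* C (algebraically closed by its type) is the completion of an algebraic
   closure of kinf: complete, and algebraic elements over kinf are dense *)
Definition is_Cinf (kinf : C -> Prop) : Prop :=
  (forall u, cauchy u -> exists l, converges_to u l) /\
  (forall x, forall eps : R, 0 < eps -> exists y, algebraic_over kinf y /\ absC (x - y) < eps).

(* D : a central division algebra over k of dimension r^2 (r = n.+1),
   realised inside M_r(kinf) via an isomorphism D (x)_k kinf = M_r(kinf) *)
Definition central_division_algebra_split (k kinf : C -> Prop) (n : nat)
  (D : 'M[C]_n.+1 -> Prop) : Prop :=
  [/\ forall g, D g -> forall i j, kinf (g i j),
      forall a, k a -> D a%:M,
      forall g h, D g -> D h -> D (g + h),
      forall g h, D g -> D h -> D (g *m h) &
    [/\
      forall g, D g -> g != 0 -> exists h, D h /\ h *m g = 1%:M,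
      forall g, D g -> (forall h, D h -> g *m h = h *m g) -> exists a, k a /\ g = a%:M &
      exists b : 'I_(n.+1 * n.+1) -> 'M[C]_n.+1,
        [/\ forall i, D (b i),
            forall g, D g -> exists c : 'I_(n.+1 * n.+1) -> C,
              (forall i, k (c i)) /\ g = \sum_i c i *: b i &
            forall c : 'I_(n.+1 * n.+1) -> C, (forall i, kinf (c i)) ->
              \sum_i c i *: b i = 0 -> forall i, c i = 0]]].

(* affine coordinates z in C^(r-1), homogeneous vector (z, 1) *)
Definition homog (n : nat) (z : 'cV[C]_n) : 'cV[C]_n.+1 :=
  \col_i (oapp (fun j => z j 0) 1 (unlift ord_max i)).

Definition dehomog (n : nat) (w : 'cV[C]_n.+1) : 'cV[C]_n :=
  \col_j (w (lift ord_max j) 0 / w ord_max 0).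

Definition Omega (kinf : C -> Prop) (n : nat) (z : 'cV[C]_n) : Prop :=
  forall c : 'rV[C]_n.+1, (forall i, kinf (c 0 i)) -> c != 0 -> (c *m homog z) 0 0 != 0.

Definition act (n : nat) (g : 'M[C]_n.+1) (z : 'cV[C]_n) : 'cV[C]_n :=
  dehomog (g *m homog z).

Definition Hgraph (kinf : C -> Prop) (n : nat) (g : 'M[C]_n.+1)
  (p : 'cV[C]_n * 'cV[C]_n) : Prop :=
  Omega kinf p.1 /\ p.2 = act g p.1.

Definition normcv (n : nat) (v : 'cV[C]_n) : R := \big[Num.max/0]_(i < n) absC (v i 0).

Definition pconv (n : nat) (x : nat -> 'cV[C]_n * 'cV[C]_n) (a : 'cV[C]_n * 'cV[C]_n) :=
  forall eps : R, 0 < eps -> exists N, forall m, (N <= m)%N ->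
    normcv ((x m).1 - a.1) < eps /\ normcv ((x m).2 - a.2) < eps.

(* tangent space at a of a (smooth) analytic subset H of C^(r-1) x C^(r-1),
   defined as the set of tangent vectors lim c_m (x_m - a), x_m in H, x_m -> a *)
Definition tangent (n : nat) (H : 'cV[C]_n * 'cV[C]_n -> Prop)
  (a v : 'cV[C]_n * 'cV[C]_n) : Prop :=
  exists (x : nat -> 'cV[C]_n * 'cV[C]_n) (c : nat -> C),
    [/\ forall m, H (x m), pconv x a &
        pconv (fun m => (c m *: ((x m).1 - a.1), c m *: ((x m).2 - a.2))) v].

End Defs.

(* Main.v *)
Require Import Defs.
From HB Require Import structures.
From mathcomp Require Import all_boot all_order all_algebra.
From mathcomp Require Import reals.
From mathcomp Require Import boolp.
From mathcomp Require Import ring lra.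
Import Order.TTheory GRing.Theory Num.Theory.
Local Open Scope ring_scope.
Set Implicit Arguments. Unset Strict Implicit. Unset Printing Implicit Defensive.

Section SubF.
Variables (C : closedFieldType) (kinf : C -> Prop) (Hk : is_subfield kinf).
Definition kb : {pred C} := fun x => let _ := Hk in `[< kinf x >].
Lemma kbP x : reflect (kinf x) (x \in kb).
Proof. exact: asboolP. Qed.
Lemma kb_closed : divring_closed kb.
Proof.
case: Hk => h0 h1 hB hM hV; split.
- exact/kbP.
- by move=> x y /kbP hx /kbP hy; apply/kbP; apply: hB.
- move=> x y /kbP hx /kbP hy; apply/kbP; apply: hM => //.
  have [->|y0] := eqVneq y 0; first by rewrite invr0.
  exact: hV.
Qed.
HB.instance Definition _ := GRing.isDivringClosed.Build C kb kb_closed.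
Inductive KF := mkKF x & x \in kb.
Definition vKF u := let: mkKF x _ := u in x.
HB.instance Definition _ := [isSub for vKF].
HB.instance Definition _ := [Choice of KF by <:].
HB.instance Definition _ := [SubChoice_isSubComUnitRing of KF by <:].
HB.instance Definition _ := [SubComUnitRing_isSubIntegralDomain of KF by <:].
HB.instance Definition _ := [SubIntegralDomain_isSubField of KF by <:].
End SubF.


Lemma horner_eig (C : comNzRingType) n (M : 'M[C]_n.+1) (h : 'cV_n.+1) lam P :
  M *m h = lam *: h -> horner_mx M P *m h = P.[lam] *: h.
Proof.
move=> Mh; elim/poly_ind: P => [|P c IH].
  by rewrite rmorph0 mul0mx horner0 scale0r.
rewrite rmorphD rmorphM /= horner_mx_X horner_mx_C !hornerE.
rewrite mulmxDl -mulmxA Mh -scalemxAr IH mul_scalar_mx scalerDl. by rewrite (scalerA lam) mulrC.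
Qed.

Lemma horner_geig (C : comNzRingType) n (M : 'M[C]_n.+1) (h U : 'cV_n.+1) lam t P :
  M *m h = lam *: h -> M *m U = lam *: U + t *: h ->
  horner_mx M P *m U = P.[lam] *: U + (t * P^`().[lam]) *: h.
Proof.
move=> Mh MU; elim/poly_ind: P => [|P c IH].
  by rewrite rmorph0 mul0mx deriv0 !horner0 mulr0 !scale0r addr0.
rewrite rmorphD rmorphM /= horner_mx_X horner_mx_C !hornerE.
rewrite derivD derivC derivM derivX addr0 !hornerE.
rewrite mulmxDl -mulmxA MU mulmxDr -!scalemxAr IH (horner_eig _ Mh).
rewrite mul_scalar_mx scalerDr !scalerA !scalerDl mulrDr scalerDl.
rewrite (mulrC lam P.[lam]) (mulrCA lam t) (mulrC lam).
rewrite -!addrA; congr (_ + _).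
by rewrite addrA addrC.
Qed.

Section Core.
Variables (F : fieldType) (C : closedFieldType) (f : {rmorphism F -> C}) (n : nat).
Variables (G : 'M[F]_n.+1) (h : 'cV[C]_n.+1) (lam : C).
Hypothesis Om : forall c : 'rV[F]_n.+1, c != 0 -> (map_mx f c *m h) 0 0 != 0.
Hypothesis hlast : h ord_max 0 = 1.
Hypothesis Gh : map_mx f G *m h = lam *: h.

Let p := mxminpoly G.

Lemma hnz : h != 0.
Proof. by apply/eqP => h0; move: hlast; rewrite h0 mxE => /eqP; rewrite eq_sym oner_eq0. Qed.

Lemma S1 Q : (map_poly f Q).[lam] = 0 -> horner_mx G Q = 0.
Proof.
move=> HQ; apply/row_matrixP => i; rewrite row0; apply/eqP; apply/negPn/negP => /Om.
by rewrite map_row -row_mul map_horner_mx (horner_eig _ Gh) HQ scale0r row0 mxE eqxx.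
Qed.

Lemma S2 Q : (p %| Q) = ((map_poly f Q).[lam] == 0).
Proof.
apply/idP/idP => [pQ|/eqP HQ]; last exact/mxminpoly_min/S1.
have : map_mx f (horner_mx G p) *m h = 0 by rewrite mx_root_minpoly map_mx0 mul0mx.
rewrite map_horner_mx (horner_eig _ Gh) => /eqP; rewrite scaler_eq0 (negPf hnz) orbF => /eqP Hp.
by rewrite -(divpK pQ) rmorphM hornerM /= Hp mulr0.
Qed.

Lemma p_neq0 : p != 0.
Proof. exact/monic_neq0/mxminpoly_monic. Qed.

Lemma S3 q : q %| p -> size q != 1%N -> p %| q.
Proof.
move=> qp sq; have Ep := divpK qp; set s := p %/ q in Ep.
have : (map_poly f (s * q)).[lam] == 0 by rewrite Ep -(S2 p) dvdpp.
rewrite rmorphM hornerM /= mulf_eq0 => /orP[|]; last by rewrite -(S2 q).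
rewrite -(S2 s) => ps.
have s0 : s != 0 by apply: contraNneq p_neq0 => s0; rewrite -Ep s0 mul0r.
have q0 : q != 0 by apply: contraNneq p_neq0 => q0; rewrite -Ep q0 mulr0.
have := dvdp_leq s0 ps; rewrite -{1}Ep size_mul // => hle.
exfalso; move: sq; rewrite -size_poly_eq0 in q0.
case: (size q) q0 hle => [|[|k]] //= _; by rewrite !addnS /= ltnNge leq_addr.
Qed.

Lemma S4 m (Q : {poly F}) : (size Q <= m)%N -> Q != 0 ->
  (forall mu, root (map_poly f Q) mu -> root (map_poly f p) mu) ->
  (degree_mxminpoly G %| (size Q).-1)%N.
Proof.
elim: m Q => [|m IH] Q sQ Q0 rQ.
  by move: Q0; rewrite -size_poly_eq0; move: sQ; rewrite leqn0 => /eqP ->.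
have [sQ1|sQ1] := eqVneq (size Q) 1%N; first by rewrite sQ1 dvdn0.
have [mu rmu] : exists mu, root (map_poly f Q) mu.
  by apply/closed_rootP; rewrite size_map_poly.
have pQ : p %| Q.
  apply: dvdp_trans (dvdp_gcdr p Q); apply: S3; first exact: dvdp_gcdl.
  rewrite -(size_map_poly f); apply/closed_rootP; exists mu.
  by rewrite gcdp_map root_gcd rmu rQ.
have EQ := divpK pQ; set Q' := Q %/ p in EQ.
have Q'0 : Q' != 0 by apply: contraNneq Q0 => e; rewrite -EQ e mul0r.
have sQE : size Q = (size Q' + (degree_mxminpoly G))%N.
  by rewrite -EQ size_mul // ?p_neq0 // size_mxminpoly addnS.
have sQ'pos : (0 < size Q')%N by rewrite lt0n size_poly_eq0.
have dpos : (0 < degree_mxminpoly G)%N by apply: mxminpoly_nonconstant.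
rewrite sQE -subn1 addnC -addnBA // subn1 dvdn_addr ?dvdnn //.
apply: IH => //.
  by rewrite -ltnS (leq_trans _ sQ) // sQE -addn1 leq_add2l.
move=> nu rnu; apply: rQ; by rewrite -EQ rmorphM rootM rnu.
Qed.


Lemma S5 : (degree_mxminpoly G %| n.+1)%N.
Proof.
have := @S4 (size (char_poly G)) (char_poly G) (leqnn _).
rewrite size_char_poly /=; apply.
  exact/monic_neq0/char_poly_monic.
move=> mu; rewrite map_char_poly -root_mxminpoly => rmu.
apply: root_dvdp rmu; apply: mxminpoly_min.
by rewrite -map_horner_mx mx_root_minpoly map_mx0.
Qed.

Lemma deg1_scalar : degree_mxminpoly G = 1%N -> exists a, G = a%:M.
Proof.
move=> d1.
have sp : size p = 2%N by rewrite size_mxminpoly d1.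
have Ep : p = 'X + (p`_0)%:P.
  apply/polyP => i; rewrite coefD coefX coefC.
  case: i => [|[|i]] /=; first by rewrite add0r.
    rewrite addr0; have := mxminpoly_monic G; move/monicP.
    by rewrite /lead_coef sp.
  by rewrite addr0 nth_default // sp.
exists (- p`_0).
have := mx_root_minpoly G; rewrite -/p {1}Ep rmorphD /= horner_mx_X horner_mx_C.
by move/eqP; rewrite addr_eq0 => /eqP ->; rewrite raddfN.
Qed.


Variables (U : 'cV[C]_n.+1) (t : C).
Hypothesis nchar : (n.+1)%:R != 0 :> C.
Hypothesis Ulast : U ord_max 0 = 0.
Hypothesis GU : map_mx f G *m U = lam *: U + t *: h.
Hypothesis dfull : degree_mxminpoly G = n.+1.

Lemma sep : (map_poly f p^`()).[lam] != 0.
Proof.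
apply/negP; rewrite -S2 => pp'.
have sp : size p = n.+2 by rewrite size_mxminpoly dfull.
have p'0 : p^`() != 0.
  apply/eqP => /(congr1 (fun q : {poly F} => q`_n)); rewrite coef_deriv coef0.
  have := mxminpoly_monic G; move/monicP; rewrite /lead_coef -/p sp /= => ->.
  move/eqP; apply/negP; rewrite -(inj_eq (fmorph_inj f)) rmorph0 rmorphMn rmorph1.
  exact: nchar.
have := dvdp_leq p'0 pp'; rewrite leqNgt; move/negP; apply.
exact: lt_size_deriv p_neq0.
Qed.

Lemma t0 : t = 0.
Proof.
have := horner_geig (map_poly f p) Gh GU.
rewrite -map_horner_mx mx_root_minpoly map_mx0 mul0mx.
have -> : (map_poly f p).[lam] = 0 by apply/eqP; rewrite -S2 dvdpp.
rewrite scale0r add0r deriv_map => /esym/eqP; rewrite scaler_eq0 (negPf hnz) orbF.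
by rewrite mulf_eq0 (negPf sep) orbF => /eqP.
Qed.

Lemma U0 : U = 0.
Proof.
have GU' : map_mx f G *m U = lam *: U by rewrite GU t0 scale0r addr0.
pose B : 'M[F]_n.+1 := \matrix_(i < n.+1) row ord_max (G ^+ i).
have detB : \det B != 0.
  apply/negP => /det0P [x x0 xB].
  pose Px : {poly F} := \sum_(i < n.+1) x 0 i *: 'X^i.
  have HP : horner_mx G Px = \sum_(i < n.+1) x 0 i *: G ^+ i.
    rewrite /Px raddf_sum /=; apply: eq_bigr => i _.
    by rewrite linearZ /= rmorphXn /= horner_mx_X.
  have rowP0 : row ord_max (horner_mx G Px) = 0.
    rewrite -xB mulmx_sum_row HP; apply/rowP => j.
    rewrite !mxE !summxE; apply: eq_bigr => i _.
    by rewrite !mxE.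
  have : (map_poly f Px).[lam] = 0.
    have := congr1 (fun r => (map_mx f r *m h) 0 0) rowP0.
    rewrite /= map_row -row_mul map_horner_mx (horner_eig _ Gh) map_mx0 mul0mx.
    by rewrite !mxE hlast mulr1.
  move/eqP; rewrite -S2 => pPx.
  have sPx : (size Px <= n.+1)%N.
    rewrite /Px; apply: (leq_trans (size_sum _ _ _)).
    apply/bigmax_leqP => i _; apply: (leq_trans (size_scale_leq _ _)).
    by rewrite size_polyXn.
  have Px0 : Px = 0.
    apply/eqP/negPn/negP => Px0; have := dvdp_leq Px0 pPx.
    by rewrite size_mxminpoly dfull ltnNge sPx.
  apply/negP: x0; rewrite negbK; apply/eqP/rowP => i.
  have := congr1 (fun q : {poly F} => q`_i) Px0.
  rewrite /Px coef_sum coef0 mxE (bigD1 i) //= coefZ coefXn eqxx mulr1 big1 ?addr0 //.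
  move=> j /negPf ji; rewrite coefZ coefXn.
  have -> : (nat_of_ord i == j) = false by rewrite eq_sym; exact: ji.
  by rewrite mulr0.
have uB : map_mx f B \in unitmx by rewrite map_unitmx unitmxE unitfE.
have BU : map_mx f B *m U = 0.
  apply/row_matrixP => i; rewrite row_mul row0.
  rewrite -map_row rowK map_row -row_mul rmorphXn /=.
  have -> : map_mx f G ^+ i = horner_mx (map_mx f G) ('X ^+ i).
    by rewrite rmorphXn /= horner_mx_X.
  rewrite (horner_eig _ GU') hornerXn; apply/rowP => j.
  by rewrite !mxE ord1 Ulast mulr0.
by rewrite -(mulKmx uB U) BU mulmx0.
Qed.

End Core.

Section An.
Variables (R : realType) (C : closedFieldType) (absC : C -> R).
Hypothesis Habs : is_nonarch_abs absC.

Lemma abs_ge0 x : 0 <= absC x. Proof. by case: Habs. Qed.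
Lemma abs_eq0 x : absC x = 0 <-> x = 0. Proof. by case: Habs. Qed.
Lemma absM x y : absC (x * y) = absC x * absC y. Proof. by case: Habs. Qed.
Lemma absD x y : absC (x + y) <= Num.max (absC x) (absC y). Proof. by case: Habs. Qed.
Lemma abs0 : absC 0 = 0. Proof. exact/abs_eq0. Qed.
Lemma abs1 : absC 1 = 1.
Proof.
have h1 : absC 1 * absC 1 = absC 1 by rewrite -absM mulr1.
have n0 : absC 1 != 0 by apply/eqP => /abs_eq0 /eqP; rewrite oner_eq0.
by apply: (mulfI n0); rewrite h1 mulr1.
Qed.
Lemma absN x : absC (- x) = absC x.
Proof.
have hm : absC (-1) = 1.
  have h1 : absC (-1) * absC (-1) = 1 by rewrite -absM mulrNN mulr1 abs1.
  have := abs_ge0 (-1); move: h1; set y := absC (-1) => h1 hy.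
  have : (y - 1) * (y + 1) = 0 by rewrite mulrDr mulrBl h1; ring.
  move/eqP; rewrite mulf_eq0 => /orP[]; first by rewrite subr_eq0 => /eqP.
  by rewrite addr_eq0 => /eqP yE; exfalso; move: hy; rewrite yE oppr_ge0 ler10.
by rewrite -mulN1r absM hm mul1r.
Qed.
Lemma absB x y : absC (x - y) = absC (y - x).
Proof. by rewrite -absN opprB. Qed.

Lemma lt_max_of (a b e : R) : a < e -> b < e -> Num.max a b < e.
Proof. by move=> ha hb; rewrite gt_max ha hb. Qed.

Lemma lim_const (c : C) : converges_to absC (fun _ => c) c.
Proof. by move=> e e0; exists 0%N => m _; rewrite subrr abs0. Qed.

Lemma lim_add u v a b : converges_to absC u a -> converges_to absC v b ->
  converges_to absC (fun m => u m + v m) (a + b).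
Proof.
move=> hu hv e e0; have [N1 H1] := hu e e0; have [N2 H2] := hv e e0.
exists (maxn N1 N2) => m; rewrite geq_max => /andP[m1 m2].
rewrite (_ : _ - _ = (u m - a) + (v m - b)); last by ring.
by apply: le_lt_trans (absD _ _) _; apply: lt_max_of; [apply: H1|apply: H2].
Qed.

Lemma lim_opp u a : converges_to absC u a -> converges_to absC (fun m => - u m) (- a).
Proof.
move=> hu e e0; have [N H] := hu e e0; exists N => m hm.
by rewrite -opprD absN; apply: H.
Qed.

Lemma lim_mul u v a b : converges_to absC u a -> converges_to absC v b ->
  converges_to absC (fun m => u m * v m) (a * b).
Proof.
move=> hu hv e e0.
have pa : 0 < 1 + absC a by rewrite ltr_wpDr ?abs_ge0.
have pb : 0 < 1 + absC b by rewrite ltr_wpDr ?abs_ge0.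
have [N1 H1] := hu (e / (1 + absC b)) (divr_gt0 e0 pb).
have e2 : 0 < Num.min 1 (e / (1 + absC a)) by rewrite lt_min ltr01 divr_gt0.
have [N2 H2] := hv _ e2.
exists (maxn N1 N2) => m; rewrite geq_max => /andP[m1 m2].
have h1 := H1 m m1; have := H2 m m2; rewrite lt_min => /andP[h2a h2b].
rewrite (_ : _ - _ = (u m - a) * v m + a * (v m - b)); last by ring.
apply: le_lt_trans (absD _ _) _; rewrite !absM; apply: lt_max_of.
  have hv1 : absC (v m) <= 1 + absC b.
    rewrite (_ : v m = (v m - b) + b); last by ring.
    apply: le_trans (absD _ _) _; rewrite ge_max; apply/andP; split.
      by rewrite ltW // ltr_wpDr // abs_ge0.
    by rewrite lerDr ler01.
  move: h1; rewrite ltr_pdivlMr // => h1.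
  have := abs_ge0 (u m - a); have := abs_ge0 (v m).
  move: hv1 h1; set X := absC (u m - a); set Y := absC (v m); set B := absC b.
  move=> *; nra.
move: h2b; rewrite ltr_pdivlMr // => h2.
have := abs_ge0 (v m - b); have := abs_ge0 a.
move: h2; set X := absC (v m - b); set A := absC a.
move=> *; nra.
Qed.

Lemma lim_sub u v a b : converges_to absC u a -> converges_to absC v b ->
  converges_to absC (fun m => u m - v m) (a - b).
Proof. by move=> hu hv; apply: lim_add hu (lim_opp hv). Qed.

Lemma lim_unique u v a b : converges_to absC u a -> converges_to absC v b ->
  (exists N0, forall m, (N0 <= m)%N -> u m = v m) -> a = b.
Proof.
move=> hu hv [N0 H0]; apply/subr0_eq; apply/abs_eq0/eqP; rewrite eq_le abs_ge0 andbT.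
apply/ler_addgt0Pr => e e0; rewrite add0r.
have [N1 H1] := hu e e0; have [N2 H2] := hv e e0.
pose m := maxn N0 (maxn N1 N2).
have m0 : (N0 <= m)%N by rewrite leq_maxl.
have m1 : (N1 <= m)%N by rewrite /m (leq_trans (leq_maxl N1 N2)) ?leq_maxr.
have m2 : (N2 <= m)%N by rewrite /m (leq_trans (leq_maxr N1 N2)) ?leq_maxr.
rewrite (_ : a - b = (a - u m) + (v m - b)); last by rewrite H0 //; ring.
apply/ltW/(le_lt_trans (absD _ _)); apply: lt_max_of.
  by rewrite absB; apply: H1.
by apply: H2.
Qed.

Lemma lim_ext u v a : u =1 v -> converges_to absC u a -> converges_to absC v a.
Proof. by move=> E hu e e0; have [N H] := hu e e0; exists N => m hm; rewrite -E; apply: H. Qed.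

Lemma lim_sum (I : eqType) (s : seq I) (F : I -> nat -> C) (L : I -> C) :
  (forall i, converges_to absC (F i) (L i)) ->
  converges_to absC (fun m => \sum_(i <- s) F i m) (\sum_(i <- s) L i).
Proof.
move=> HF; elim: s => [|i s IH].
  by rewrite big_nil; apply: lim_ext (lim_const 0) => m; rewrite big_nil.
rewrite big_cons; apply: lim_ext (lim_add (HF i) IH) => m; by rewrite big_cons.
Qed.

Lemma lim_mxv p q (M : 'M[C]_(p, q)) (x : nat -> 'cV[C]_q) (X : 'cV[C]_q) :
  (forall j, converges_to absC (fun m => x m j 0) (X j 0)) ->
  forall i, converges_to absC (fun m => (M *m x m) i 0) ((M *m X) i 0).
Proof.
move=> HX i; rewrite mxE; apply: lim_ext; last first.
  by apply: lim_sum => j; apply: lim_mul (lim_const (M i j)) (HX j).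
by move=> m /=; rewrite mxE.
Qed.

Lemma normcv_ge n (v : 'cV[C]_n) i : absC (v i 0) <= normcv absC v.
Proof. by rewrite /normcv (bigD1 i) //= le_max lexx. Qed.

Lemma pconv_coord n (x : nat -> 'cV[C]_n * 'cV[C]_n) a :
  pconv absC x a -> forall i,
  converges_to absC (fun m => (x m).1 i 0) (a.1 i 0) /\
  converges_to absC (fun m => (x m).2 i 0) (a.2 i 0).
Proof.
move=> H i; split=> e e0; have [N HN] := H e e0; exists N => m hm;
  have [h1 h2] := HN m hm.
  by apply: le_lt_trans h1; apply: le_trans (normcv_ge _ i); rewrite !mxE.
by apply: le_lt_trans h2; apply: le_trans (normcv_ge _ i); rewrite !mxE.
Qed.

End An.

Section Homog.
Variable (C : closedFieldType).
Lemma homog_lift n (z : 'cV[C]_n) j : homog z (lift ord_max j) 0 = z j 0.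
Proof. by rewrite mxE liftK. Qed.
Lemma homog_max n (z : 'cV[C]_n) : homog z ord_max 0 = 1.
Proof. by rewrite mxE unlift_none. Qed.
Lemma act_lift n (g : 'M[C]_n.+1) z j :
  act g z j 0 = (g *m homog z) (lift ord_max j) 0 / (g *m homog z) ord_max 0.
Proof. by rewrite mxE. Qed.
Lemma act_scalar n (b : C) (z : 'cV[C]_n) : b != 0 -> act b%:M z = z.
Proof.
move=> b0; apply/colP => j; rewrite act_lift !mul_scalar_mx !mxE.
by rewrite liftK unlift_none /= mulr1 mulrC mulKf.
Qed.
Lemma entry_helper n (A h : 'cV[C]_n) (c lam : C) k :
  (c *: (A - lam *: h)) k 0 = c * (A k 0 - lam * h k 0).
Proof. by rewrite !mxE. Qed.
Lemma act1 n (z : 'cV[C]_n) : act 1%:M z = z.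
Proof. by rewrite act_scalar ?oner_eq0. Qed.
End Homog.

Unset Implicit Arguments.
Set Strict Implicit.
Theorem lemma7p2 (R : realType) (C : closedFieldType) (absC : C -> R)
  (k kinf : C -> Prop) (n : nat) (D : 'M[C]_n.+1 -> Prop)
  (gamma : 'M[C]_n.+1) (alpha : 'cV[C]_n * 'cV[C]_n) :
  is_nonarch_abs absC ->
  global_function_field k ->
  nontrivial_on absC k ->
  is_completion absC k kinf ->
  is_Cinf absC kinf ->
  central_division_algebra_split k kinf D ->
  prime n.+1 ->
  n.+1 \notin [pchar C] ->
  D gamma -> gamma != 0 ->
  ~ (forall p, Hgraph kinf gamma p <-> Hgraph kinf 1%:M p) ->
  Hgraph kinf gamma alpha -> Hgraph kinf 1%:M alpha ->
  forall v, tangent absC (Hgraph kinf gamma) alpha v ->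
            tangent absC (Hgraph kinf 1%:M) alpha v -> v = (0, 0).
Proof.
move=> Habs _ _ Hcomp _ HD Hpr Hch HDg g0 Hne Hag Ha1 v Tg T1.
have Hk : is_subfield kinf by case: Hcomp.
have Hent : forall i j, kinf (gamma i j) by case: HD => H *; apply: H.
pose G : 'M[KF Hk]_n.+1 := \matrix_(i, j) mkKF (introT (kbP Hk _) (Hent i j)).
have EG : map_mx val G = gamma by apply/matrixP => i j; rewrite !mxE.
case: Ha1 => Oma E1; rewrite act1 in E1.
case: Hag => _ Eg; rewrite E1 in Eg.
set a := alpha.1 in Oma E1 Eg *.
set h := homog a.
set lam := (gamma *m h) ord_max 0.
have n0 : (0 < n)%N by move: Hpr; case: (n).
have kb01 : forall b : bool, kinf (b%:R).
  by move=> [] /=; [rewrite mulr1n | rewrite mulr0n]; case: (Hk).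
have lam0 : lam != 0.
  apply/negP => /eqP l0.
  have a0 : forall j, a j 0 = 0.
    by move=> j; rewrite {1}Eg act_lift -/h -/lam l0 invr0 mulr0.
  pose j0 : 'I_n := Ordinal n0.
  have := Oma (delta_mx 0 (lift ord_max j0)).
  rewrite -rowE mxE homog_lift a0 eqxx => H; suff : ~~ true by []; apply: H => [i|].
    by rewrite mxE; apply: kb01.
  apply/negP => /eqP/matrixP/(_ 0 (lift ord_max j0)) /eqP.
  by rewrite !mxE !eqxx oner_eq0.
have hlast : h ord_max 0 = 1 by rewrite homog_max.
have Gh : gamma *m h = lam *: h.
  apply/colP => i; rewrite [RHS]mxE; case: (unliftP ord_max i) => [j ->|->].
    have Ea : a j 0 = act gamma a j 0 by rewrite -Eg.
    by rewrite /h homog_lift Ea act_lift -/h -/lam mulrC divfK.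
  by rewrite hlast mulr1.
have OmF : forall c : 'rV[KF Hk]_n.+1, c != 0 -> (map_mx val c *m h) 0 0 != 0.
  move=> c c0; apply: Oma => [i|].
    by rewrite mxE; apply/(kbP Hk); apply: valP.
  apply: contra c0 => /eqP mc; apply/eqP/matrixP => i j; apply: val_inj.
  by have := congr1 (fun M : 'M[C]_(1, n.+1) => M i j) mc; rewrite !mxE.
have Gh' : map_mx val G *m h = lam *: h by rewrite EG.
have nchar : (n.+1)%:R != 0 :> C.
  by move: Hch; rewrite inE /= Hpr.
have dd := S5 OmF hlast Gh'.
have v12 : v.2 = v.1.
  case: T1 => x1 [c1 [Hx1 px1 pv1]].
  apply/colP => i; have [l1 l2] := pconv_coord pv1 i.
  symmetry; apply: (lim_unique Habs l1 l2); exists 0%N => m _ /=.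
  by case: (Hx1 m) => _ ->; rewrite act1 E1.
case: Tg => x [c [Hx px pv]].
have zc : forall j, converges_to absC (fun m => (x m).1 j 0) (a j 0).
  by move=> j; have [] := pconv_coord px j.
have w1 : forall j, converges_to absC (fun m => c m * ((x m).1 j 0 - a j 0)) (v.1 j 0).
  move=> j; have [l1 _] := pconv_coord pv j.
  by apply: lim_ext l1 => m /=; rewrite !mxE.
have w2 : forall j, converges_to absC (fun m => c m * ((x m).2 j 0 - a j 0)) (v.1 j 0).
  move=> j; have [_ l2] := pconv_coord pv j.
  by rewrite -v12; apply: lim_ext l2 => m /=; rewrite !mxE E1.
pose U : 'cV[C]_n.+1 := \col_i oapp (fun j => v.1 j 0) 0 (unlift ord_max i).
pose t := (gamma *m U) ord_max 0.
have U_max : U ord_max 0 = 0 by rewrite /U mxE unlift_none.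
have U_lift : forall j, U (lift ord_max j) 0 = v.1 j 0 by move=> j; rewrite /U mxE liftK.
have GU : gamma *m U = lam *: U + t *: h.
  apply/colP => i; rewrite [RHS]mxE [X in _ = X + _]mxE [X in _ = _ + X]mxE.
  case: (unliftP ord_max i) => [j ->|->]; last first.
    by rewrite hlast U_max mulr0 mulr1 add0r.
  rewrite /h homog_lift -/h U_lift.
  pose hm m := homog (x m).1.
  pose sig m := (gamma *m hm m) ord_max 0.
  pose Wm m : 'cV[C]_n.+1 :=
    \col_i oapp (fun j => c m * ((x m).1 j 0 - a j 0)) 0 (unlift ord_max i).
  have lsig : converges_to absC sig lam.
    apply: (lim_mxv Habs) => k0; case: (unliftP ord_max k0) => [j' ->|->].
      by rewrite /h homog_lift; apply: lim_ext (zc j') => m; rewrite /hm homog_lift.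
    by rewrite hlast; apply: lim_ext (lim_const Habs _) => m; rewrite /hm homog_max.
  have lGW : forall k0, converges_to absC (fun m => (gamma *m Wm m) k0 0) ((gamma *m U) k0 0).
    apply: (lim_mxv Habs) => k0; case: (unliftP ord_max k0) => [j' ->|->].
      rewrite U_lift; apply: lim_ext (w1 j') => m; by rewrite mxE liftK.
    rewrite U_max; apply: lim_ext (lim_const Habs _) => m.
    by rewrite mxE unlift_none.
  have lL := lim_mul Habs lsig (w2 j).
  have lR := lim_sub Habs (lGW (lift ord_max j)) (lim_mul Habs (lGW ord_max) (lim_const Habs (a j 0))).
  have ev : exists N0, forall m, (N0 <= m)%N ->
      sig m * (c m * ((x m).2 j 0 - a j 0)) =
      (gamma *m Wm m) (lift ord_max j) 0 - (gamma *m Wm m) ord_max 0 * a j 0.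
    have al0 : 0 < absC lam.
      rewrite lt_def abs_ge0 // andbT; apply/eqP => /(abs_eq0 Habs) /eqP.
      by rewrite (negPf lam0).
    have [N HN] := lsig _ al0; exists N => m hmN.
    have sig0 : sig m != 0.
      by apply/eqP => s0; have := HN m hmN; rewrite s0 sub0r absN // ltxx.
    have EW : Wm m = c m *: (hm m - h).
      apply/colP => k0; rewrite [LHS]mxE [RHS]mxE [X in _ * X]mxE.
      case: (unliftP ord_max k0) => [j' ->|->] /=.
        by rewrite /hm /h !homog_lift mxE homog_lift.
      by rewrite /hm /h [X in _ + X]mxE !homog_max subrr mulr0.
    rewrite EW -!scalemxAr mulmxBr Gh !entry_helper.
    case: (Hx m) => _ ->; rewrite act_lift -/(hm m) -/(sig m).
    rewrite hlast /h homog_lift -/h -/(sig m).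
    field; exact: sig0.
  have E := lim_unique Habs lL lR ev.
  by rewrite E /t; ring.
have [_ Hd] := primeP Hpr.
have GU' : map_mx val G *m U = lam *: U + t *: h by rewrite EG.
have := Hd _ dd; case/orP => /eqP dE.
  have [b Gb] := deg1_scalar dE.
  have Eg2 : gamma = (val b)%:M by rewrite -EG Gb map_scalar_mx.
  have b0 : val b != 0 by apply: contra g0; rewrite Eg2 => /eqP ->; rewrite raddf0.
  exfalso; apply: Hne => p; rewrite /Hgraph Eg2 act_scalar // act1 //.
have U0' := U0 OmF hlast Gh' nchar U_max GU' dE.
have v10 : v.1 = 0.
  by apply/colP => j; rewrite -U_lift U0' !mxE.
by rewrite [v]surjective_pairing v12 v10.
Qed.
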